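(* Let $\alpha\in\mathbb R$ and let $(\mathfrak g_1,\varphi_1,\xi_1,\eta_1,g_1)$ and $(\mathfrak g_2,\varphi_2,\xi_2,\eta_2,g_2)$ be two almost $\alpha$-coK\''ahler Lie algebras with $\mathcal L_{\xi_i}\varphi_i=0$ for $i=1,2$ (in particular, two $K$-cosymplectic Lie algebras). For $i=1,2$ let $\mathfrak h_i=\ker\eta_i$, $J_i=\varphi_i|_{\mathfrak h_i}$, $h_i=g_i|_{\mathfrak h_i\times\mathfrak h_i}$ and $D_i=\mathrm{ad}_{\xi_i}|_{\mathfrak h_i}$. Then $\mathfrak g_1$ and $\mathfrak g_2$ are isomorphic (as almost $\alpha$-coK\''ahler Lie algebras) if and only if there exists an isomorphism $\psi:(\mathfrak h_1,J_1,h_1)\to(\mathfrak h_2,J_2,h_2)$ of almost K\''ahler Lie algebras such that $\psi\circ D_1=D_2\circ\psi$.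
   Context: For a Lie algebra, $d\eta(x,y)=-\eta([x,y])$ and $d\omega(x,y,z)=-\omega([x,y],z)-\omega([y,z],x)-\omega([z,x],y)$. An almost contact metric structure on a $(2n+1)$-dimensional Lie algebra $\mathfrak g$ is $(\varphi,\xi,\eta,g)$ with $\eta(\xi)=1$, $\varphi^2=-I+\eta\otimes\xi$, $\eta\circ\varphi=0$, $g$ positive definite with $g(\varphi x,\varphi y)=g(x,y)-\eta(x)\eta(y)$; $\Phi(x,y)=g(x,\varphi y)$. It is almost $\alpha$-coK\''ahler if $\eta\wedge\Phi^n\neq0$, $d\eta=0$, $d\Phi=2\alpha\,\eta\wedge\Phi$; for $\alpha=0$ it is almost coK\''ahler, and $K$-cosymplectic if moreover $\xi$ is Killing. $\mathcal L_\xi\varphi=\mathrm{ad}_\xi\circ\varphi-\varphi\circ\mathrm{ad}_\xi$. An almost K\''ahler structure on a $2n$-dimensional Lie algebra is $(J,h)$, $J^2=-I$, $h$ positive definite, $h(Jx,Jy)=h(x,y)$, $h(x,Jy)$ closed and nondegenerate. Isomorphism of almost $\alpha$-coK\''ahler Lie algebras: Lie algebra isomorphism $\Psi$ with $\Psi\circ\varphi_1=\varphi_2\circ\Psi$, $\eta_2\circ\Psi=\eta_1$, $\Psi\xi_1=\xi_2$, $\Psi^*g_2=g_1$. Isomorphism of almost K\''ahler Lie algebras: Lie algebra isomorphism $\psi$ with $\psi\circ J_1=J_2\circ\psi$, $\psi^*h_2=h_1$. *)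

(* Defs.v *)
From HB Require Import structures.
From mathcomp Require Import all_boot all_order all_algebra all_fingroup.
From mathcomp Require Import reals.
Set Implicit Arguments. Unset Strict Implicit. Unset Printing Implicit Defensive.
Import Order.TTheory GRing.Theory Num.Theory.
Local Open Scope ring_scope.

Section Defs.
Variable R : realType.

Definition linear_fun (V W : lmodType R) (f : V -> W) : Prop :=
  forall (a : R) (x y : V), f (a *: x + y) = a *: f x + f y.

Definition bilinear_fun (V W : lmodType R) (b : V -> V -> W) : Prop :=
  (forall y, linear_fun (fun x => b x y)) /\ (forall x, linear_fun (b x)).

Definition is_lie_bracket (V : lmodType R) (br : V -> V -> V) : Prop :=
  ((bilinear_fun br) /\
     ((forall x, br x x = 0)) /\
     ((forall x y z, br x (br y z) + br y (br z x) + br z (br x y) = 0))).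

Definition almost_contact_metric (V : lmodType R)
  (phi : V -> V) (xi : V) (eta : V -> R) (g : V -> V -> R) : Prop :=
  ((linear_fun phi) /\
     (linear_fun (eta : V -> R^o)) /\
     (bilinear_fun (g : V -> V -> R^o)) /\
     (eta xi = 1) /\
     ((forall x, phi (phi x) = - x + eta x *: xi)) /\
     ((forall x, eta (phi x) = 0)) /\
     ((forall x y, g x y = g y x)) /\
     ((forall x, x != 0 -> 0 < g x x)) /\
     ((forall x y, g (phi x) (phi y) = g x y - eta x * eta y))).

Definition fund_form (V : lmodType R) (phi : V -> V) (g : V -> V -> R) :=
  fun x y => g x (phi y).

(* (eta /\ Phi^n)(v_0,...,v_{2n}), up to a nonzero normalising constant *)
Definition eta_wedge_Phi_n (V : lmodType R) (n : nat) (eta : V -> R)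
  (Phi : V -> V -> R) (v : 'I_(2 * n).+1 -> V) : R :=
  \sum_(s : 'S_(2 * n).+1)
     (-1) ^+ (odd_perm s) * eta (v (s ord0)) *
     \prod_(k < n) Phi (v (s (inord (2 * k).+1))) (v (s (inord (2 * k).+2))).

Definition eta_wedge_Phi_n_nonzero (V : lmodType R) (n : nat) (eta : V -> R)
  (Phi : V -> V -> R) : Prop :=
  exists v : 'I_(2 * n).+1 -> V, eta_wedge_Phi_n eta Phi v != 0.

Definition d1 (V : lmodType R) (br : V -> V -> V) (eta : V -> R) :=
  fun x y => - eta (br x y).

Definition d2 (V : lmodType R) (br : V -> V -> V) (om : V -> V -> R) :=
  fun x y z => - om (br x y) z - om (br y z) x - om (br z x) y.

Definition wedge12 (V : lmodType R) (eta : V -> R) (om : V -> V -> R) :=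
  fun x y z => eta x * om y z + eta y * om z x + eta z * om x y.

Definition almost_alpha_coKahler (alpha : R) (n : nat) (V : vectType R)
  (br : V -> V -> V) (phi : V -> V) (xi : V) (eta : V -> R) (g : V -> V -> R)
  : Prop :=
  ((\dim (fullv : {vspace V}) = (2 * n).+1) /\
     (is_lie_bracket br) /\
     (almost_contact_metric phi xi eta g) /\
     (eta_wedge_Phi_n_nonzero n eta (fund_form phi g)) /\
     ((forall x y, d1 br eta x y = 0)) /\
     ((forall x y z, d2 br (fund_form phi g) x y z =
                     2 * alpha * wedge12 eta (fund_form phi g) x y z))).

Definition lie_deriv_xi_phi_zero (V : lmodType R) (br : V -> V -> V)
  (phi : V -> V) (xi : V) : Prop :=
  forall x, br xi (phi x) - phi (br xi x) = 0.

Definition coKahler_iso (V1 V2 : lmodType R)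
  (br1 : V1 -> V1 -> V1) (phi1 : V1 -> V1) (xi1 : V1) (eta1 : V1 -> R) (g1 : V1 -> V1 -> R)
  (br2 : V2 -> V2 -> V2) (phi2 : V2 -> V2) (xi2 : V2) (eta2 : V2 -> R) (g2 : V2 -> V2 -> R)
  (Psi : V1 -> V2) : Prop :=
  ((linear_fun Psi) /\
     (bijective Psi) /\
     ((forall x y, Psi (br1 x y) = br2 (Psi x) (Psi y))) /\
     ((forall x, Psi (phi1 x) = phi2 (Psi x))) /\
     ((forall x, eta2 (Psi x) = eta1 x)) /\
     (Psi xi1 = xi2) /\
     ((forall x y, g2 (Psi x) (Psi y) = g1 x y))).

(* psi is an isomorphism of almost Kahler Lie algebras
   (h1 = ker eta1, J1 = phi1|h1, h1 = g1|h1) -> (h2 = ker eta2, J2, h2),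
   represented by a map V1 -> V2 whose values outside ker eta1 are irrelevant *)
Definition aKahler_iso_on_kernels (V1 V2 : lmodType R)
  (br1 : V1 -> V1 -> V1) (phi1 : V1 -> V1) (eta1 : V1 -> R) (g1 : V1 -> V1 -> R)
  (br2 : V2 -> V2 -> V2) (phi2 : V2 -> V2) (eta2 : V2 -> R) (g2 : V2 -> V2 -> R)
  (psi : V1 -> V2) : Prop :=
  ((
      (forall x, eta1 x = 0 -> eta2 (psi x) = 0)) /\
     ((forall a x y, eta1 x = 0 -> eta1 y = 0 -> psi (a *: x + y) = a *: psi x + psi y)) /\
     (
      (forall x y, eta1 x = 0 -> eta1 y = 0 -> psi x = psi y -> x = y)) /\
     ((forall y, eta2 y = 0 -> exists2 x, eta1 x = 0 & psi x = y)) /\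
     (
      (forall x y, eta1 x = 0 -> eta1 y = 0 -> psi (br1 x y) = br2 (psi x) (psi y))) /\
     (
      (forall x, eta1 x = 0 -> psi (phi1 x) = phi2 (psi x))) /\
     (
      (forall x y, eta1 x = 0 -> eta1 y = 0 -> g2 (psi x) (psi y) = g1 x y))).

End Defs.

(* Main.v *)
Require Import Defs.
From HB Require Import structures.
From mathcomp Require Import all_boot all_order all_algebra all_fingroup.
From mathcomp Require Import reals.
From Stdlib Require Import ClassicalEpsilon.
Set Implicit Arguments. Unset Strict Implicit.
Import GRing.Theory Num.Theory.
Local Open Scope ring_scope.

Lemma lf0 {R : realType} (V W : lmodType R) (f : V -> W) :
  linear_fun f -> f 0 = 0.
Proof.
move=> hf; have H := hf 1 0 0; rewrite !scale1r addr0 in H.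
by apply: (addrI (f 0)); rewrite addr0 -H.
Qed.

Lemma lfD {R : realType} (V W : lmodType R) (f : V -> W) :
  linear_fun f -> forall x y, f (x + y) = f x + f y.
Proof. by move=> hf x y; have := hf 1 x y; rewrite !scale1r. Qed.

Lemma lfZ {R : realType} (V W : lmodType R) (f : V -> W) :
  linear_fun f -> forall a x, f (a *: x) = a *: f x.
Proof. by move=> hf a x; have := hf a x 0; rewrite !addr0 (lf0 hf) addr0. Qed.

Lemma lfN {R : realType} (V W : lmodType R) (f : V -> W) :
  linear_fun f -> forall x, f (- x) = - f x.
Proof. by move=> hf x; rewrite -scaleN1r (lfZ hf) scaleN1r. Qed.

Lemma lfB {R : realType} (V W : lmodType R) (f : V -> W) :
  linear_fun f -> forall x y, f (x - y) = f x - f y.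
Proof. by move=> hf x y; rewrite (lfD hf) (lfN hf). Qed.

Lemma acm_phixi {R : realType} (V : lmodType R) phi (xi : V) eta g :
  almost_contact_metric phi xi eta g -> phi xi = 0.
Proof.
move=> [hphi [heta [[gl gr] [exi [pp [ep [gs [gp gphi]]]]]]]].
apply/eqP; apply: contraT => hne.
have := gp _ hne.
have := gphi (phi xi) (phi xi).
rewrite pp exi scale1r addNr ep mulr0 subr0.
have -> : g 0 0 = 0 by apply: (lf0 (gl 0)).
by move=> <-; rewrite Order.POrderTheory.ltxx.
Qed.

Lemma acm_gxi {R : realType} (V : lmodType R) phi (xi : V) eta g :
  almost_contact_metric phi xi eta g -> forall y, g xi y = eta y.
Proof.
move=> H y; have := H.
move=> [hphi [heta [[gl gr] [exi [pp [ep [gs [gp gphi]]]]]]]].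
have := gphi xi y; rewrite (acm_phixi H) exi mul1r.
have -> : g 0 (phi y) = 0 by apply: (lf0 (gl (phi y))).
by move/eqP; rewrite eq_sym subr_eq0 => /eqP.
Qed.

Lemma lfZr {R : realType} (V : lmodType R) (f : V -> R) :
  linear_fun (f : V -> R^o) -> forall a x, f (a *: x) = a * f x.
Proof. move=> hf a x; exact: (lfZ hf). Qed.

Section BL.
Context {R : realType} {V W : lmodType R} (b : V -> V -> W) (hb : bilinear_fun b).
Lemma blDl x y z : b (x + y) z = b x z + b y z. Proof. exact: (lfD (hb.1 z)). Qed.
Lemma blDr x y z : b z (x + y) = b z x + b z y. Proof. exact: (lfD (hb.2 z)). Qed.
Lemma blZl a x z : b (a *: x) z = a *: b x z. Proof. exact: (lfZ (hb.1 z)). Qed.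
Lemma blZr a x z : b z (a *: x) = a *: b z x. Proof. exact: (lfZ (hb.2 z)). Qed.
Lemma bl0l z : b 0 z = 0. Proof. exact: (lf0 (hb.1 z)). Qed.
End BL.

Lemma brdec {R : realType} (V : lmodType R) (br : V -> V -> V) :
  bilinear_fun br -> (forall x, br x x = 0) ->
  forall xi h k a b, br (h + a *: xi) (k + b *: xi) = br h k + (a *: br xi k - b *: br xi h).
Proof.
move=> hb alt xi h k a b.
have anti : forall x y, br x y = - br y x.
  move=> x y; apply/eqP; rewrite -addr_eq0; apply/eqP.
  have := alt (x + y); rewrite (blDl hb) !(blDr hb) !alt add0r addr0 => <-.
  by rewrite addrC.
rewrite (blDl hb) !(blDr hb) !(blZl hb) !(blZr hb) alt !scaler0 addr0.
rewrite (anti h xi) scalerN.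
by rewrite -!addrA; congr (_ + _); rewrite addrC.
Qed.

Lemma gdec {R : realType} (V : lmodType R) phi (xi : V) eta g :
  almost_contact_metric phi xi eta g -> forall h k a b, eta h = 0 -> eta k = 0 ->
  g (h + a *: xi) (k + b *: xi) = g h k + a * b.
Proof.
move=> H h k a b hh hk; have := H.
move=> [hphi [heta [gb [exi [pp [ep [gs [gp gphi]]]]]]]].
have gx := acm_gxi H.
rewrite (blDl gb) !(blDr gb) !(blZl gb) !(blZr gb) /=.
rewrite (gs h xi) !gx hh hk exi.
rewrite !scaler0 add0r !addr0; congr (_ + _).
change (a * (b * 1) = a * b); by rewrite mulr1.
Qed.

Unset Implicit Arguments. Set Strict Implicit.

Theorem mainTheorem11 (R : realType) (alpha : R)
  (n1 : nat) (V1 : vectType R) (br1 : V1 -> V1 -> V1) (phi1 : V1 -> V1) (xi1 : V1)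
  (eta1 : V1 -> R) (g1 : V1 -> V1 -> R)
  (n2 : nat) (V2 : vectType R) (br2 : V2 -> V2 -> V2) (phi2 : V2 -> V2) (xi2 : V2)
  (eta2 : V2 -> R) (g2 : V2 -> V2 -> R) :
  almost_alpha_coKahler alpha n1 br1 phi1 xi1 eta1 g1 ->
  almost_alpha_coKahler alpha n2 br2 phi2 xi2 eta2 g2 ->
  lie_deriv_xi_phi_zero br1 phi1 xi1 ->
  lie_deriv_xi_phi_zero br2 phi2 xi2 ->
  (exists Psi : V1 -> V2,
     coKahler_iso br1 phi1 xi1 eta1 g1 br2 phi2 xi2 eta2 g2 Psi) <->
  (exists psi : V1 -> V2,
     aKahler_iso_on_kernels br1 phi1 eta1 g1 br2 phi2 eta2 g2 psi /\
     (* psi o D1 = D2 o psi on h1, with D_i = ad_{xi_i} restricted to h_i *)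
     (forall x, eta1 x = 0 -> psi (br1 xi1 x) = br2 xi2 (psi x))).
Proof.
move=> [_ [[bl1 [alt1 _]] [acm1 [_ [hd1 _]]]]].
move=> [_ [[bl2 [alt2 _]] [acm2 [_ [hd2 _]]]]] _ _.
have acm1' := acm1; have acm2' := acm2.
move: acm1' acm2' => [phl1 [etl1 [gb1 [exi1 [_ [ep1 _]]]]]].
move=> [phl2 [etl2 [gb2 [exi2 [_ [ep2 _]]]]]].
split.
  move=> [Psi [PL [[Qi c1 c2] [Pbr [Pphi [Peta [Pxi Pg]]]]]]].
  exists Psi; split; last by move=> x _; rewrite Pbr Pxi.
  split; first by move=> x hx; rewrite Peta.
  split; first by move=> a x y _ _; exact: PL.
  split; first by move=> x y _ _ e; rewrite -(c1 x) e c1.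
  split; first by move=> y hy; exists (Qi y); [rewrite -Peta c2 | exact: c2].
  split; first by move=> x y _ _; exact: Pbr.
  split; first by move=> x _; exact: Pphi.
  by move=> x y _ _; exact: Pg.
move=> [psi [[pe [pl [pinj [psurj [pbr [pphi pg]]]]]] pD]].
have kbr1 : forall x y, eta1 (br1 x y) = 0.
  by move=> x y; have := hd1 x y; rewrite /d1 => /eqP; rewrite oppr_eq0 => /eqP.
have e0 : eta1 0 = 0 := lf0 etl1.
have kD : forall x y, eta1 x = 0 -> eta1 y = 0 -> eta1 (x + y) = 0.
  by move=> x y hx hy; rewrite (lfD etl1) hx hy addr0.
have kZ : forall a x, eta1 x = 0 -> eta1 (a *: x) = 0.
  by move=> a x hx; rewrite (lfZr etl1) hx mulr0.
have kB : forall x y, eta1 x = 0 -> eta1 y = 0 -> eta1 (x - y) = 0.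
  by move=> x y hx hy; rewrite (lfB etl1) hx hy subr0.
have psi0 : psi 0 = 0.
  have H := pl 1 0 0 e0 e0; rewrite !scale1r addr0 in H.
  by apply: (addrI (psi 0)); rewrite addr0 -H.
have psiD : forall x y, eta1 x = 0 -> eta1 y = 0 -> psi (x + y) = psi x + psi y.
  by move=> x y hx hy; have := pl 1 x y hx hy; rewrite !scale1r.
have psiZ : forall a x, eta1 x = 0 -> psi (a *: x) = a *: psi x.
  by move=> a x hx; have := pl a x 0 hx e0; rewrite !addr0 psi0 addr0.
have psiB : forall x y, eta1 x = 0 -> eta1 y = 0 -> psi (x - y) = psi x - psi y.
  move=> x y hx hy; rewrite -scaleN1r psiD ?psiZ ?scaleN1r //.
  by rewrite -scaleN1r kZ.
have ekh : forall x, eta1 (x - eta1 x *: xi1) = 0.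
  by move=> x; rewrite (lfB etl1) (lfZr etl1) exi1 mulr1 subrr.
have ekh2 : forall y, eta2 (y - eta2 y *: xi2) = 0.
  by move=> y; rewrite (lfB etl2) (lfZr etl2) exi2 mulr1 subrr.
pose Psi := fun x => psi (x - eta1 x *: xi1) + eta1 x *: xi2.
have eta1E : forall h a, eta1 h = 0 -> eta1 (h + a *: xi1) = a.
  by move=> h a hh; rewrite (lfD etl1) (lfZr etl1) hh exi1 mulr1 add0r.
have eta2E : forall h a, eta2 h = 0 -> eta2 (h + a *: xi2) = a.
  by move=> h a hh; rewrite (lfD etl2) (lfZr etl2) hh exi2 mulr1 add0r.
have PsiE : forall h a, eta1 h = 0 -> Psi (h + a *: xi1) = psi h + a *: xi2.
  move=> h a hh; rewrite /Psi eta1E //; congr (psi _ + _); exact: addrK.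
have PsiK : forall z, eta1 z = 0 -> Psi z = psi z.
  by move=> z hz; rewrite /Psi hz !scale0r subr0 addr0.
have red : forall P : V1 -> Prop,
    (forall h a, eta1 h = 0 -> P (h + a *: xi1)) -> forall x, P x.
  by move=> P HP x; have := HP _ (eta1 x) (ekh x); rewrite subrK.
have PE : forall x, eta2 (Psi x) = eta1 x.
  by apply: (red) => h a hh; rewrite PsiE // eta1E // eta2E // pe.
pose inv := fun y => epsilon (inhabits (0 : V1)) (fun x => eta1 x = 0 /\ psi x = y).
have invP : forall y, eta2 y = 0 -> eta1 (inv y) = 0 /\ psi (inv y) = y.
  move=> y hy; have [x ? ?] := psurj y hy.
  by apply: (@epsilon_spec V1 (inhabits 0) (fun x => eta1 x = 0 /\ psi x = y)); exists x.
exists Psi; split.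
  move=> a x y; rewrite /Psi.
  have -> : a *: x + y - eta1 (a *: x + y) *: xi1
          = a *: (x - eta1 x *: xi1) + (y - eta1 y *: xi1).
    by rewrite (lfD etl1) (lfZr etl1) scalerDl -scalerA scalerBr opprD addrACA.
  rewrite pl ?ekh // (lfD etl1) (lfZr etl1) scalerDl -scalerA scalerDr.
  by rewrite addrACA.
split.
  exists (fun y => inv (y - eta2 y *: xi2) + eta2 y *: xi1).
    move=> x; rewrite PE /Psi addrK.
    have [h1 h2] := invP (psi (x - eta1 x *: xi1)) (pe _ (ekh x)).
    by rewrite (pinj _ _ h1 (ekh x) h2) subrK.
  move=> y.
  have [h1 h2] := invP (y - eta2 y *: xi2) (ekh2 y).
  by rewrite PsiE // h2 subrK.
split.
  apply: (red) => h a hh; apply: (red) => k b hk.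
  rewrite !PsiE // (brdec bl1 alt1) PsiK; last first.
    by repeat first [apply: (kB) | apply: (kD) | apply: (kZ) | apply: (kbr1)].
  apply: etrans; last by symmetry; exact: (brdec bl2 alt2).
  rewrite psiD ?psiB ?psiZ ?pD ?pbr //;
    try by repeat first [apply: (kB) | apply: (kD) | apply: (kZ) | apply: (kbr1)].
split.
  apply: (red) => h a hh.
  rewrite (lfD phl1) (lfZ phl1) (acm_phixi acm1) scaler0 addr0 PsiK ?ep1 //.
  by rewrite PsiE // (lfD phl2) (lfZ phl2) (acm_phixi acm2) scaler0 addr0 pphi.
split; first exact: PE.
split.
  have H := PsiE 0 1 e0.
  by rewrite add0r scale1r psi0 add0r scale1r in H.
apply: (red) => h a hh; apply: (red) => k b hk.
by rewrite !PsiE // (gdec acm1) // (gdec acm2) ?pe // pg.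
Qed.
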